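(* Let $(P_n(x))_{n\ge0}$ be a sequence of polynomials such that $\sum_{n\ge0}P_n(x)\frac{t^n}{n!}=f(t)e^{xt}$ for some $f$ holomorphic at $0$ with $f(0)\neq0$, and such that $P_n(1-x)=(-1)^nP_n(x)$ for all $n\ge0$. Let $N$ be a positive integer. If the function $F(t)=f(t)-\sum_{k=0}^{N}E_k(0)\frac{t^k}{k!}$ is odd, then $P_n(x)=E_n(x)$ for all $n\ge0$ and $f(t)=\frac{2}{e^t+1}$.
   Context: $E_n(x)$ denotes the Euler polynomials, defined by $\sum_{n\ge0}E_n(x)\frac{t^n}{n!}=\frac{2e^{xt}}{e^t+1}$. *)

(* Defs.v *)
From Stdlib Require Import Reals.
From Coquelicot Require Import Coquelicot.

Open Scope C_scope.

Definition cexp (z : C) : C :=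
  RtoC (exp (Re z)) * (RtoC (cos (Im z)) + Ci * RtoC (sin (Im z))).

Definition cfact (n : nat) : C := RtoC (INR (Stdlib.Arith.Factorial.fact n)).

Definition is_poly_fun (p : C -> C) : Prop :=
  exists (d : nat) (a : nat -> C), forall x : C, p x = sum_n (fun k => a k * x ^ k) d.

Definition holomorphic_at0 (f : C -> C) : Prop :=
  exists r : R, (0 < r)%R /\ forall t : C, (Cmod t < r)%R -> ex_derive f t.

Definition egf_identity (Q : nat -> C -> C) (g : C -> C -> C) : Prop :=
  forall x : C, exists r : R, (0 < r)%R /\
    forall t : C, (Cmod t < r)%R ->
      is_series (fun n => Q n x * t ^ n / cfact n) (g x t).

Definition euler_polys (E : nat -> C -> C) : Prop :=
  (forall n, is_poly_fun (E n)) /\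
  egf_identity E (fun x t => 2 * cexp (x * t) / (cexp t + 1)).

(* Main.v *)
Require Import Defs.
From Stdlib Require Import Reals Lra Lia Arith.
From Coquelicot Require Import Coquelicot.
Open Scope C_scope.

Local Open Scope R_scope.

Lemma lim0_bounded (u : nat -> R) : is_lim_seq u 0 -> exists M, forall n, Rabs (u n) <= M.
Proof.
  intros H.
  apply is_lim_seq_spec in H.
  destruct (H (mkposreal 1 Rlt_0_1)) as [N HN]. simpl in HN.
  exists (sum_f_R0 (fun k => Rabs (u k)) N + 1).
  intros n. destruct (le_lt_dec N n) as [Hn|Hn].
  - specialize (HN n Hn). rewrite Rminus_0_r in HN.
    assert (0 <= sum_f_R0 (fun k => Rabs (u k)) N).
    { apply cond_pos_sum. intros; apply Rabs_pos. }
    lra.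
  - assert (Hg : forall m, (m <= N)%nat -> Rabs (u m) <= sum_f_R0 (fun k => Rabs (u k)) N).
    { clear HN Hn. induction N; intros m Hm.
      + simpl. replace m with 0%nat by lia. lra.
      + simpl. destruct (Nat.eq_dec m (S N)) as [->|Hne].
        * assert (0 <= sum_f_R0 (fun k => Rabs (u k)) N).
          { apply cond_pos_sum. intros; apply Rabs_pos. }
          lra.
        * specialize (IHN m ltac:(lia)).
          pose proof (Rabs_pos (u (S N))). lra. }
    specialize (Hg n ltac:(lia)).
    lra.
Qed.

Lemma ps_unique_R (b : nat -> R) (r : R) : (0 < r)%R ->
  (forall t : R, (Rabs t < r)%R -> is_series (fun n => b n * t ^ n)%R 0%R) ->
  forall n, b n = 0%R.
Proof.
  intros Hr H n.
  assert (Hrad : Rbar_lt 0 (CV_radius b)).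
  { assert (Hb : exists M, forall k, Rabs (b k * (r/2) ^ k) <= M).
    { apply lim0_bounded. apply ex_series_lim_0. eexists. apply H.
      rewrite Rabs_pos_eq; lra. }
    pose proof (CV_radius_bounded b) as [Hub _].
    specialize (Hub (r/2)%R Hb).
    destruct (CV_radius b) as [c| |]; simpl in *; lra. }
  pose proof (Derive_n_coef b n Hrad) as Hc.
  assert (Hloc : Derive_n (PSeries b) n 0 = Derive_n (fun _ => 0%R) n 0).
  { apply Derive_n_ext_loc. exists (mkposreal r Hr). intros t Ht.
    apply is_pseries_unique. apply is_pseries_R. apply H.
    unfold ball in Ht; simpl in Ht; unfold AbsRing_ball, abs, minus, plus, opp in Ht; simpl in Ht.
    replace t with (t + - 0)%R by ring. exact Ht. }
  assert (Derive_n (fun _ : R => 0%R) n 0 = 0%R).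
  { destruct n. reflexivity. apply Derive_n_const. }
  rewrite Hloc, H0 in Hc.
  pose proof (INR_fact_neq_0 n).
  symmetry in Hc; apply Rmult_integral in Hc.
  destruct Hc as [Hc|Hc]. auto. contradiction.
Qed.

Local Open Scope C_scope.

Lemma sum_n_Re (u : nat -> C) n : sum_n (fun k => Re (u k)) n = Re (sum_n u n).
Proof.
  induction n. rewrite !sum_O. reflexivity.
  rewrite !sum_Sn, IHn. reflexivity.
Qed.
Lemma sum_n_Im (u : nat -> C) n : sum_n (fun k => Im (u k)) n = Im (sum_n u n).
Proof.
  induction n. rewrite !sum_O. reflexivity.
  rewrite !sum_Sn, IHn. reflexivity.
Qed.

Lemma is_series_Re (u : nat -> C) (l : C) : is_series u l -> is_series (fun n => Re (u n)) (Re l).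
Proof.
  intros H. unfold is_series in *.
  apply filterlim_locally. intros eps.
  pose proof (proj1 (filterlim_locally _ _) H eps) as H1.
  eapply filter_imp; [|exact H1]. intros n [Hb _].
  rewrite sum_n_Re. exact Hb.
Qed.
Lemma is_series_Im (u : nat -> C) (l : C) : is_series u l -> is_series (fun n => Im (u n)) (Im l).
Proof.
  intros H. unfold is_series in *.
  apply filterlim_locally. intros eps.
  pose proof (proj1 (filterlim_locally _ _) H eps) as H1.
  eapply filter_imp; [|exact H1]. intros n [_ Hb].
  rewrite sum_n_Im. exact Hb.
Qed.

Lemma ps_unique_C (a : nat -> C) (r : R) : (0 < r)%R ->
  (forall t : R, (Rabs t < r)%R -> is_series (fun n => a n * RtoC t ^ n) (0:C)) ->
  forall n, a n = 0.
Proof.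
  intros Hr H n.
  assert (HRe : forall n, Re (a n) = 0%R).
  { apply (ps_unique_R _ r Hr). intros t Ht.
    pose proof (is_series_Re _ _ (H t Ht)) as H1.
    eapply is_series_ext; [|exact H1]. intros k. simpl. rewrite <- RtoC_pow. unfold RtoC, Re. simpl. ring. }
  assert (HIm : forall n, Im (a n) = 0%R).
  { apply (ps_unique_R _ r Hr). intros t Ht.
    pose proof (is_series_Im _ _ (H t Ht)) as H1.
    eapply is_series_ext; [|exact H1]. intros k. simpl.
    rewrite <- RtoC_pow. unfold RtoC, Im. simpl. ring. }
  destruct (a n) as [x y] eqn:E. specialize (HRe n). specialize (HIm n).
  rewrite E in HRe, HIm. simpl in HRe, HIm. subst. reflexivity.
Qed.

Lemma is_series_C_unique (u : nat -> C) (l1 l2 : C) : is_series u l1 -> is_series u l2 -> l1 = l2.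
Proof.
  intros H1 H2.
  exact (@filterlim_locally_unique nat C_AbsRing C_NormedModule eventually
     (Proper_StrongProper _ eventually_filter) (sum_n u) l1 l2 H1 H2).
Qed.

Definition first_seq (l : C) : nat -> C := fun n => match n with O => l | S _ => RtoC 0 end.
Lemma is_series_C_first (l : C) : is_series (first_seq l) l.
Proof.
  assert (H : forall n, sum_n (first_seq l) n = l).
  { induction n. rewrite sum_O. reflexivity. rewrite sum_Sn, IHn. apply Cplus_0_r. }
  unfold is_series. eapply filterlim_ext. intros n. symmetry. apply H.
  apply filterlim_const.
Qed.

Lemma cexp_real (t : R) : cexp (RtoC t) = RtoC (exp t).
Proof.
  unfold cexp. simpl. rewrite cos_0, sin_0.
  unfold Cmult, Cplus, RtoC, Ci. simpl. f_equal; ring.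
Qed.

Lemma cexp_0 : cexp 0 = 1.
Proof. rewrite cexp_real, exp_0. reflexivity. Qed.

Lemma cfact_nz n : cfact n <> 0.
Proof.
  unfold cfact. intros H. apply (f_equal Re) in H. simpl in H.
  apply (INR_fact_neq_0 n). exact H.
Qed.

Lemma Cpow_opp (x : C) n : (- x) ^ n = (-1) ^ n * x ^ n.
Proof. rewrite <- Cpow_mult_l. f_equal. ring. Qed.

Lemma RtoC_exp_plus1_nz (t : R) : RtoC (exp t) + 1 <> 0.
Proof.
  intros H. apply (f_equal Re) in H. simpl in H. pose proof (exp_pos t). lra.
Qed.

Lemma E0_coeffs (E : nat -> C -> C) (HE : euler_polys E) :
  forall n, E n 0 * (1 + (-1) ^ n) / cfact n - first_seq 2 n = 0.
Proof.
  destruct HE as [_ HE]. destruct (HE 0) as [r [Hr Hs]].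
  apply (ps_unique_C _ r Hr). intros t Ht.
  assert (S1 := Hs (RtoC t) ltac:(rewrite Cmod_R; exact Ht)).
  assert (S2 := Hs (RtoC (-t)) ltac:(rewrite Cmod_R, Rabs_Ropp; exact Ht)).
  pose proof (is_series_minus _ _ _ _ (is_series_plus _ _ _ _ S1 S2) (is_series_C_first 2)) as S3.
  clear S1 S2.
  match type of S3 with is_series _ ?v => assert (Hv : @eq C v (RtoC 0)) end.
  { repeat change (plus ?x ?y) with (Cplus x y). repeat change (opp ?x) with (Copp x).
    rewrite !Cmult_0_l, cexp_0, !cexp_real, exp_Ropp, RtoC_inv by (apply Rgt_not_eq, exp_pos).
    pose proof (RtoC_exp_plus1_nz t).
    assert (RtoC (exp t) <> 0).
    { intros H1. apply (f_equal Re) in H1. simpl in H1. pose proof (exp_pos t). lra. }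
    field. split; [exact H0|]. simpl. rewrite Cplus_comm. exact H. }
  rewrite Hv in S3. eapply is_series_ext; [|exact S3].
  intros n. repeat change (plus ?x ?y) with (Cplus x y). repeat change (opp ?x) with (Copp x).
  rewrite RtoC_opp, Cpow_opp. pose proof (cfact_nz n).
  unfold first_seq. destruct n; simpl; field; auto.
Qed.

Ltac nz := first [assumption | intros HH; apply (f_equal Re) in HH; simpl in HH; lra].

Lemma m1_pow_even m : (-1) ^ (2 * m) = 1.
Proof. rewrite Cpow_mult_r. replace ((-1)^2) with (RtoC 1) by (simpl; ring). apply Cpow_1_l. Qed.
Lemma m1_pow_odd m : (-1) ^ (2 * m + 1) = -1.
Proof. rewrite Cpow_add_r, m1_pow_even. simpl. ring. Qed.

Lemma E00 (E : nat -> C -> C) (HE : euler_polys E) : E 0%nat 0 = 1.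
Proof.
  pose proof (E0_coeffs E HE 0) as h. unfold first_seq, cfact in h. simpl in h.
  replace (E 0%nat 0) with ((E 0%nat 0 * (1 + 1) / RtoC 1 - 2) / 2 + 1).
  rewrite h. field.
  field; repeat split; intros H; apply (f_equal Re) in H; simpl in H; lra.
Qed.

Lemma E0even (E : nat -> C -> C) (HE : euler_polys E) m : E (2 * m + 2)%nat 0 = 0.
Proof.
  pose proof (E0_coeffs E HE (2 * m + 2)) as h.
  replace (2 * m + 2)%nat with (2 * (m+1))%nat in * by lia.
  rewrite m1_pow_even in h.
  assert (hf : first_seq 2 (2 * (m+1)) = 0).
  { replace (2*(m+1))%nat with (S (2*m+1)) by lia. reflexivity. }
  rewrite hf in h.
  pose proof (cfact_nz (2 * (m+1))).
  replace (E (2 * (m + 1))%nat 0) with ((E (2 * (m + 1))%nat 0 * (1 + 1) / cfact (2 * (m + 1)) - 0) * cfact (2 * (m+1)) / 2).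
  rewrite h. field; repeat split; nz.
  field; repeat split; nz.
Qed.

Lemma S_sym (E : nat -> C -> C) (HE : euler_polys E) (t : C) N :
  sum_n (fun k => E k 0 * t ^ k / cfact k) N + sum_n (fun k => E k 0 * (- t) ^ k / cfact k) N = 2.
Proof.
  induction N.
  - rewrite !sum_O. rewrite E00 by exact HE. unfold cfact. simpl. field; repeat split; nz.
  - rewrite !sum_Sn. repeat change (plus ?x ?y) with (Cplus x y).
    assert (E (S N) 0 * t ^ S N / cfact (S N) + E (S N) 0 * (- t) ^ S N / cfact (S N) = 0).
    { pose proof (cfact_nz (S N)). rewrite Cpow_opp.
      destruct (Nat.Even_or_Odd (S N)) as [[m Hm]|[m Hm]].
      - destruct m. lia. rewrite Hm in *. replace (2 * S m)%nat with (2 * m + 2)%nat in * by lia.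
        rewrite E0even by exact HE. field; repeat split; nz.
      - rewrite Hm in *. rewrite m1_pow_odd. field; repeat split; nz. }
    rewrite <- IHN. match goal with |- ?a + ?b + (?c + ?d) = _ => transitivity (a + c + (b + d)); [ring | rewrite H; ring] end.
Qed.

Theorem mainTheorem6 (E : nat -> C -> C) (HE : euler_polys E)
  (P : nat -> C -> C) (f : C -> C) (N : nat)
  (HP : forall n, is_poly_fun (P n))
  (Hf : holomorphic_at0 f) (Hf0 : f 0 <> 0)
  (Hgf : egf_identity P (fun x t => f t * cexp (x * t)))
  (Hsym : forall (n : nat) (x : C), P n (1 - x) = (-1) ^ n * P n x)
  (HN : (0 < N)%nat)
  (Hodd : exists r : R, (0 < r)%R /\ forall t : C, (Cmod t < r)%R ->
     let F := fun s => f s - sum_n (fun k => E k 0 * s ^ k / cfact k) N in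
     F (- t) = - F t) :
  (forall (n : nat) (x : C), P n x = E n x) /\
  (exists r : R, (0 < r)%R /\ forall t : C, (Cmod t < r)%R -> f t = 2 / (cexp t + 1)).
Proof.
  destruct Hodd as [rO [HrO Hod]].
  destruct (Hgf 0) as [r0 [Hr0 H0s]]. destruct (Hgf 1) as [r1 [Hr1 H1s]].
  set (rm := Rmin rO (Rmin r0 r1)).
  assert (Hrm : (0 < rm)%R) by (unfold rm; repeat apply Rmin_pos; auto).
  assert (Hfg : forall t, (Cmod t < rm)%R -> f t = 2 / (cexp t + 1)).
  { intros t Ht.
    assert (HtO : (Cmod t < rO)%R) by (eapply Rlt_le_trans; [exact Ht | apply Rmin_l]).
    assert (Ht0 : (Cmod t < r0)%R) by (eapply Rlt_le_trans; [exact Ht | unfold rm; eapply Rle_trans; [apply Rmin_r | apply Rmin_l]]).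
    assert (Ht1 : (Cmod t < r1)%R).
    { eapply Rlt_le_trans; [exact Ht|]. unfold rm. eapply Rle_trans; apply Rmin_r. }
    assert (Hs : f t * cexp (1 * t) = f (- t) * cexp (0 * - t)).
    { apply (is_series_C_unique (fun n => P n 1 * t ^ n / cfact n)).
      - exact (H1s t Ht1).
      - eapply is_series_ext; [|exact (H0s (- t) ltac:(rewrite Cmod_opp; exact Ht0))].
        intros n. cbv beta. match goal with |- ?a = ?b => change (@eq C a b) end. rewrite Cpow_opp.
        pose proof (Hsym n 0) as h. replace (1 - 0) with (RtoC 1) in h by ring.
        rewrite h. unfold Cdiv. ring. }
    rewrite Cmult_1_l, Cmult_0_l, cexp_0, Cmult_1_r in Hs.
    pose proof (Hod t HtO) as ho. cbv beta in ho.
    pose proof (S_sym E HE t N) as hs.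
    assert (Hsum : f t * (cexp t + 1) = 2).
    { rewrite <- hs. rewrite Cmult_plus_distr_l, Hs, Cmult_1_r.
      transitivity (f (-t) - sum_n (fun k : nat => E k 0 * (- t) ^ k / cfact k) N
                    + f t + sum_n (fun k : nat => E k 0 * (- t) ^ k / cfact k) N); [ring|].
      rewrite ho. ring. }
    assert (Hnz : cexp t + 1 <> 0).
    { intros H. rewrite H, Cmult_0_r in Hsum. apply (f_equal Re) in Hsum. simpl in Hsum. lra. }
    rewrite <- Hsum. field. exact Hnz. }
  split.
  - intros n x.
    destruct HE as [HEp HEs]. destruct (HEs x) as [rE [HrE HEx]]. destruct (Hgf x) as [rP [HrP HPx]].
    set (r := Rmin rm (Rmin rE rP)).
    assert (Hr : (0 < r)%R) by (unfold r; repeat apply Rmin_pos; auto).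
    assert (Ha : forall n, (P n x - E n x) / cfact n = 0).
    { apply (ps_unique_C _ r Hr). intros t Ht.
      assert (Htm : (Cmod (RtoC t) < rm)%R) by (rewrite Cmod_R; eapply Rlt_le_trans; [exact Ht | apply Rmin_l]).
      assert (HtE : (Cmod (RtoC t) < rE)%R).
      { rewrite Cmod_R. eapply Rlt_le_trans; [exact Ht|]. unfold r. eapply Rle_trans; [apply Rmin_r | apply Rmin_l]. }
      assert (HtP : (Cmod (RtoC t) < rP)%R).
      { rewrite Cmod_R. eapply Rlt_le_trans; [exact Ht|]. unfold r. eapply Rle_trans; apply Rmin_r. }
      pose proof (is_series_minus _ _ _ _ (HPx t HtP) (HEx t HtE)) as S3.
      match type of S3 with is_series _ ?v => assert (Hv : @eq C v (RtoC 0)) end.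
      { repeat change (plus ?x ?y) with (Cplus x y). repeat change (opp ?x) with (Copp x).
        rewrite (Hfg t Htm). assert (Hnz : cexp t + 1 <> 0).
        { rewrite cexp_real. apply RtoC_exp_plus1_nz. }
        field. exact Hnz. }
      rewrite Hv in S3. eapply is_series_ext; [|exact S3].
      intros k. repeat change (plus ?x ?y) with (Cplus x y). repeat change (opp ?x) with (Copp x).
      pose proof (cfact_nz k). match goal with |- ?a = ?b => change (@eq C a b) end. cbv beta. field. exact H. }
    pose proof (Ha n) as h. pose proof (cfact_nz n).
    replace (P n x) with ((P n x - E n x) / cfact n * cfact n + E n x) by (field; exact H).
    rewrite h. ring.
  - exists rm. split; auto.
Qed.
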